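(* For every odd prime $p$ there exists a $\Gamma_p$-equivariant continuous map $f:S(U_1\oplus U_1)\to S(U_p\oplus (p-1)V_1)$. (Here $\dim_{\mathbb{R}}(U_1\oplus U_1)=4p>\dim_{\mathbb{R}}(U_p\oplus(p-1)V_1)=4p-2$, and both representations have no nonzero $\Gamma_p$-fixed vectors.)
   Context: Let $a$ be a fixed generator of $C_p$ and $\xi_p=e^{2\pi\sqrt{-1}/p}$. $\Gamma_p=T^{p-1}\rtimes_\rho C_p$ is the semidirect product with $a t a^{-1}=\rho(a)(t)$, $\rho(a)(t)=(t_{p-1}^{-1},\,t_1t_{p-1}^{-1},\dots,t_{p-2}t_{p-1}^{-1})$ for $t=(t_1,\dots,t_{p-1})$. For $k\in\mathbb{Z}\setminus\{0\}$, $U_k=\mathbb{C}^p$ with coordinates $(z_0,\dots,z_{p-1})$, $a\cdot(z_0,\dots,z_{p-1})=(z_{p-1},z_0,\dots,z_{p-2})$ and $t\cdot(z_0,\dots,z_{p-1})=(t_1^kz_0,\ t_1^{-k}t_2^kz_1,\ \dots,\ t_{p-2}^{-k}t_{p-1}^kz_{p-2},\ t_{p-1}^{-k}z_{p-1})$. $V_1=\mathbb{C}$ with $T^{p-1}$ acting trivially and $a\cdot z=\xi_pz$; $(p-1)V_1$ is the direct sum of $p-1$ copies. $S(\cdot)$ denotes the unit sphere of the underlying real representation. *)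

(* Defs.v *)
From HB Require Import structures.
From mathcomp Require Import all_boot all_order all_algebra.
From mathcomp Require Import all_classical all_reals all_analysis.
From mathcomp Require Import complex.
Import Order.TTheory GRing.Theory Num.Theory numFieldNormedType.Exports.



Unset Printing Implicit Defensive.

Local Open Scope ring_scope.
Local Open Scope complex_scope.

(* The complex numbers over a real type R, packaged as a numClosedFieldType
   so that the (norm) topology of MathComp-Analysis is found canonically. *)
Definition Cplx (R : realType) : numClosedFieldType := R[i].

Section Gamma.
Variable R : realType.
Local Notation C := (Cplx R).

Definition xi (p : nat) : C :=
  (cos (2 * pi / p%:R) +i* sin (2 * pi / p%:R))%C.

(* An element t = (t_1, ..., t_{p-1}) of the torus T^{p-1} is encoded as a
   function t : nat -> C; only the values t 1, ..., t (p-1) matter. *)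
Definition in_torus (p : nat) (t : nat -> C) : Prop :=
  forall i, (0 < i < p)%N -> `|t i| = 1.

Definition tc (p : nat) (t : nat -> C) (j : nat) : C :=
  if (0 < j < p)%N then t j else 1.

Definition sqnorm (n : nat) (v : 'rV[C]_n) : C := \sum_(j < n) `|v ord0 j| ^+ 2.

Definition torusU (p : nat) (k : int) (t : nat -> C) (v : 'rV[C]_p) : 'rV[C]_p :=
  \row_(j < p) (tc p t j ^ (- k) * tc p t j.+1 ^ k * v ord0 j).

(* Action of the generator a on U_k: (z_0,...,z_{p-1}) |-> (z_{p-1}, z_0, ..., z_{p-2}),
   i.e. the new j-th coordinate is the old (j-1 mod p)-th one. *)
Definition shiftU (p : nat) (v : 'rV[C]_p) : 'rV[C]_p :=
  \row_(j < p) v ord0 (insubd j ((j + p.-1) %% p)%N).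

Definition actU (p : nat) (k : int) (t : nat -> C) (m : nat) (v : 'rV[C]_p) :=
  torusU p k t (iter m (shiftU p) v).

(* Action of t a^m on V_1 (T^{p-1} acts trivially, a acts by xi_p),
   coordinatewise on (p-1)V_1 = C^{p-1}. *)
Definition actV (p : nat) (t : nat -> C) (m : nat) (w : 'rV[C]_(p.-1)) :
  'rV[C]_(p.-1) := (xi p ^+ m) *: w.

Definition src (p : nat) := ('rV[C]_p * 'rV[C]_p)%type.
Definition tgt (p : nat) := ('rV[C]_p * 'rV[C]_(p.-1))%type.

Definition act_src (p : nat) (t : nat -> C) (m : nat) (x : src p) : src p :=
  (actU p 1 t m x.1, actU p 1 t m x.2).
Definition act_tgt (p : nat) (t : nat -> C) (m : nat) (y : tgt p) : tgt p :=
  (actU p p%:Z t m y.1, actV p t m y.2).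

Definition S_src (p : nat) : set (src p) :=
  [set x | sqnorm p x.1 + sqnorm p x.2 = 1].
Definition S_tgt (p : nat) : set (tgt p) :=
  [set y | sqnorm p y.1 + sqnorm p.-1 y.2 = 1].

End Gamma.

(* Main.v *)
Require Import Defs.
From HB Require Import structures.
From mathcomp Require Import all_boot all_order all_algebra.
From mathcomp Require Import all_classical all_reals all_analysis.
From mathcomp Require Import complex.
From mathcomp Require Import ring zify cyclic.
Import Order.TTheory GRing.Theory Num.Theory numFieldNormedType.Exports.
Local Open Scope ring_scope.
Local Open Scope classical_set_scope.



Section Xi.
Variable R : realType.
Local Notation C := (Cplx R).

Lemma xiX (p n : nat) : xi R p ^+ n = ((cos (2 * pi / p%:R *+ n)) +i* (sin (2 * pi / p%:R *+ n)))%C.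
Proof.
elim: n => [|n IH]; first by rewrite expr0 !mulr0n cos0 sin0.
rewrite exprS IH /xi.
rewrite -[((_ +i* _) * (_ +i* _))%C]/(_ +i* _)%C.
rewrite !mulrSr cosD sinD; congr (Complex _ _); ring.
Qed.

Lemma xi_norm p : `|xi R p| = 1.
Proof.
rewrite /xi. rewrite -[`|(_ +i* _)%C|]/(Num.sqrt (_ + _))%:C%C.
by rewrite cos2Dsin2 sqrtr1.
Qed.

Lemma xiXp p : (0 < p)%N -> xi R p ^+ p = 1.
Proof.
move=> p0; rewrite xiX -mulr_natr divfK ?pnatr_eq0 -?lt0n //.
have -> : (2 : R) * pi = pi *+ 2 by rewrite mulrC mulr_natr.
by rewrite cos2pi sin2pi.
Qed.

Lemma xiX_neq1 p d : (0 < d < p)%N -> xi R p ^+ d != 1.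
Proof.
move=> /andP[d0 dp]; rewrite xiX; apply/negP => /eqP [] hc _.
set th := (2 * pi / p%:R *+ d) in hc.
have p0 : (0 < p)%N by apply: leq_trans dp.
have q0 : 0 < 2 * pi / p%:R :> R.
  by apply: divr_gt0; rewrite ?ltr0n // mulr_gt0 ?pi_gt0 ?ltr0n.
have th0 : 0 < th.
  by rewrite /th pmulrn_rgt0.
have th2 : th < pi *+ 2.
  have e2 : (pi : R) *+ 2 = p%:R * (2 * pi / p%:R).
    by rewrite mulrC divfK ?pnatr_eq0 -?lt0n // mulrC mulr_natr.
  by rewrite /th -mulr_natl e2 ltr_pM2r // ltr_nat.
have key : forall x : R, 0 <= x <= pi -> cos x = 1 -> x = 0.
  move=> x hx cx; apply: (@cos_inj R x 0); rewrite ?in_itv //= ?cos0 //.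
  by rewrite lexx pi_ge0.
case: (lerP th pi) => hth.
  have h := key th; rewrite (ltW th0) hth in h.
  by move: th0; rewrite h // ltxx.
have : (pi : R) *+ 2 - th = 0.
  apply: key; last by rewrite cosB cos2pi sin2pi mul0r addr0 mul1r.
  rewrite subr_ge0 (ltW th2) /= lerBlDr -[pi *+ 2]mulr2n mulr2n lerD2l. 
  exact: ltW.
by move/eqP; rewrite subr_eq0 => /eqP h; move: th2; rewrite h ltxx.
Qed.
End Xi.



Section Cont.
Variable R : realType.
Local Notation C := (Cplx R).
Variable p : nat.
Local Notation X := (src R p).

Lemma cont_z j : continuous (fun x : X => x.1 ord0 j).
Proof.
move=> x; apply: (@continuous_comp _ _ _ fst (fun M : 'rV[C]_p => M ord0 j)).
  exact: cvg_fst.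
exact: coord_continuous.
Qed.

Lemma cont_w j : continuous (fun x : X => x.2 ord0 j).
Proof.
move=> x; apply: (@continuous_comp _ _ _ snd (fun M : 'rV[C]_p => M ord0 j)).
  exact: cvg_snd.
exact: coord_continuous.
Qed.

Lemma conj_cont : continuous (fun z : C => z^*).
Proof.
move=> z A /= /nbhs_ballP[e e0 eA]; apply/nbhs_ballP; exists e => // y.
rewrite /ball_ /= => h; apply: eA; rewrite /ball_ /=.
by rewrite -rmorphB norm_conjC.
Qed.



Lemma cont_row (T : topologicalType) n (g : T -> 'rV[C]_n) :
  (forall j, continuous (fun x => g x ord0 j)) -> continuous g.
Proof.
move=> gc x A /(@nbhs_ballP C) [e e0 eA].
have h : forall j, \forall y \near x, `|g x ord0 j - g y ord0 j| < e.
  move=> j; exact: (cvgr_dist_lt _ _ (gc j x) _ e0).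
have h2 : \forall y \near x, forall j, `|g x ord0 j - g y ord0 j| < e.
  exact: filter_forall.
rewrite nbhs_simpl /=.
move: h2; apply: filterS => y hy; apply: eA.
split => // i j; rewrite (ord1 i); exact: hy.
Qed.


Definition hyp (r u : C) : C := `| r + 'i * `|u| |.
Definition enorm (s : seq C) : C := foldr (fun u r => hyp r u) 0 s.

Lemma enorm_ge0 s : 0 <= enorm s.
Proof. by case: s => [|u s] //=; rewrite /hyp normr_ge0. Qed.

Lemma hyp_sq r u : 0 <= r -> hyp r u ^+ 2 = r ^+ 2 + `|u| ^+ 2.
Proof.
move=> r0; rewrite /hyp [LHS]normCK conjC_rect ?ger0_real ?normr_ge0 //.
rewrite mulrC -subr_sqr exprMn sqrCi mulN1r opprK.
by [].
Qed.

Lemma enorm_sq s : enorm s ^+ 2 = \sum_(u <- s) `|u| ^+ 2.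
Proof.
elim: s => [|u s IH]; first by rewrite big_nil /= expr0n.
by rewrite big_cons /= hyp_sq ?enorm_ge0 // IH addrC.
Qed.

Lemma enorm_eq s1 s2 : \sum_(u <- s1) `|u| ^+ 2 = \sum_(u <- s2) `|u| ^+ 2 ->
  enorm s1 = enorm s2.
Proof.
move=> h; apply/eqP; rewrite -(@eqrXn2 _ 2) ?enorm_ge0 //.
by rewrite !enorm_sq h.
Qed.

Lemma enorm_eq0 s : enorm s = 0 -> forall u, u \in s -> u = 0.
Proof.
move=> h u us; apply/eqP; rewrite -normr_eq0 -sqrf_eq0.
have := enorm_sq s; rewrite h expr0n /= => /esym/eqP.
rewrite psumr_eq0 => [/allP/(_ u us)/implyP/(_ isT) //|v _].
exact: exprn_ge0.
Qed.

Lemma contM (T : topologicalType) (f g : T -> C) :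
  continuous f -> continuous g -> continuous (fun x => f x * g x).
Proof. by move=> fc gc x; exact: (continuousM (fc x) (gc x)). Qed.

Lemma contD (T : topologicalType) (f g : T -> C) :
  continuous f -> continuous g -> continuous (fun x => f x + g x).
Proof. by move=> fc gc x; exact: (continuousD (fc x) (gc x)). Qed.

Lemma contK (T : topologicalType) (c : C) : continuous (fun _ : T => c).
Proof. by move=> x; exact: cvg_cst. Qed.

Lemma cont_norm (T : topologicalType) (f : T -> C) :
  continuous f -> continuous (fun x => `|f x|).
Proof.
move=> fc x; apply: (@continuous_comp _ _ _ f (fun z : C => `|z|) x (fc x)).
exact: norm_continuous.
Qed.

Lemma cont_conj (T : topologicalType) (f : T -> C) :
  continuous f -> continuous (fun x => (f x)^*).
Proof.
move=> fc x; apply: (@continuous_comp _ _ _ f (fun z : C => z^*) x (fc x)).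
exact: conj_cont.
Qed.

Lemma cont_exp (T : topologicalType) (f : T -> C) n :
  continuous f -> continuous (fun x => f x ^+ n).
Proof.
move=> fc; elim: n => [|n IH]; first exact: contK.
under eq_fun do rewrite exprS.
exact: contM.
Qed.

Lemma cont_prod (T : topologicalType) n (f : 'I_n -> T -> C) :
  (forall j, continuous (f j)) -> continuous (fun x => \prod_(j < n) f j x).
Proof.
elim: n f => [|n IH] f fc.
  under eq_fun do rewrite big_ord0; exact: contK.
under eq_fun do rewrite big_ord_recr.
apply: contM; last exact: fc.
exact: (IH (fun j => f (widen_ord (leqnSn n) j))).
Qed.

Lemma cont_sum (T : topologicalType) n (f : 'I_n -> T -> C) :
  (forall j, continuous (f j)) -> continuous (fun x => \sum_(j < n) f j x).
Proof.
elim: n f => [|n IH] f fc.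
  under eq_fun do rewrite big_ord0; exact: contK.
under eq_fun do rewrite big_ord_recr.
apply: contD; last exact: fc.
exact: (IH (fun j => f (widen_ord (leqnSn n) j))).
Qed.

Lemma enorm_cont (T : topologicalType) (fs : seq (T -> C)) :
  (forall f, f \in fs -> continuous f) ->
  continuous (fun x => enorm (map (fun f => f x) fs)).
Proof.
elim: fs => [|f fs IH] hf /=; first exact: contK.
rewrite /hyp; apply: cont_norm.
apply: contD; first by apply: IH => g gs; apply: hf; rewrite inE gs orbT.
apply: contM; first exact: contK.
apply: cont_norm; apply: hf; by rewrite inE eqxx.
Qed.

End Cont.


Section Main.
Variable R : realType.
Local Notation C := (Cplx R).
Variable p : nat.
Local Notation X := (src R p).
Local Notation xi := (xi R p).

Definition Zp (x : X) : C := \prod_(j < p) x.1 ord0 j.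
Definition Wp (x : X) : C := \prod_(j < p) x.2 ord0 j.
Definition yv (x : X) : 'rV[C]_p :=
  \row_j (x.1 ord0 j ^+ p * (Zp x)^* + x.2 ord0 j ^+ p * (Wp x)^*).
Definition aa (x : X) (j : 'I_p) : C := `|x.1 ord0 j| ^+ 2 + 'i * `|x.2 ord0 j| ^+ 2.
Definition ah (x : X) (k : nat) : C := \sum_(j < p) xi ^+ (k * j) * aa x j.
Definition Vv (x : X) : 'rV[C]_(p.-1) := \row_(k < p.-1) ah x k.+1 ^+ (k.+1 ^ p.-2).

Definition sh (j : 'I_p) : 'I_p := insubd j ((j + p.-1) %% p)%N.

Lemma val_sh j : val (sh j) = ((j + p.-1) %% p)%N.
Proof.
rewrite /sh val_insubd ltn_pmod //; case: j => j jp; exact: leq_ltn_trans jp.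
Qed.

Lemma sh_inj : injective sh.
Proof.
move=> i j /(congr1 val); rewrite !val_sh => /eqP; rewrite eqn_modDr.
by rewrite !modn_small // => /eqP /val_inj.
Qed.

Lemma shiftUE (v : 'rV[C]_p) : shiftU R p v = \row_j v ord0 (sh j).
Proof. by []. Qed.

Definition shp (x : X) : X := (shiftU R p x.1, shiftU R p x.2).

Lemma Zp_sh x : Zp (shp x) = Zp x.
Proof.
rewrite /Zp /shp /=; under eq_bigr do rewrite shiftUE mxE.
by rewrite [RHS](reindex_inj sh_inj).
Qed.

Lemma Wp_sh x : Wp (shp x) = Wp x.
Proof.
rewrite /Wp /shp /=; under eq_bigr do rewrite shiftUE mxE.
by rewrite [RHS](reindex_inj sh_inj).
Qed.

Lemma yv_sh x : yv (shp x) = shiftU R p (yv x).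
Proof.
apply/rowP => j; rewrite shiftUE !mxE Zp_sh Wp_sh /shp /=.
by [].
Qed.

Hypothesis p0 : (0 < p)%N.

Lemma xi_mod n : xi ^+ n = xi ^+ (n %% p).
Proof. by rewrite {1}(divn_eq n p) exprD mulnC exprM xiXp // expr1n mul1r. Qed.

Lemma aa_sh x j : aa (shp x) j = aa x (sh j).
Proof. by rewrite /aa /shp /= !shiftUE !mxE. Qed.

Lemma ah_sh x k : ah (shp x) k = xi ^+ k * ah x k.
Proof.
rewrite /ah mulr_sumr.
have e : forall j : 'I_p, xi ^+ (k * j) = xi ^+ k * xi ^+ (k * sh j).
  move=> j; rewrite -exprD xi_mod [in RHS]xi_mod; congr (_ ^+ _).
  rewrite val_sh -mulnS -modnMmr -[in RHS]modnMmr; congr (_ %% _)%N.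
  rewrite -addn1 modnDml -addnA addn1 prednK // modnDr //.
under eq_bigr do rewrite aa_sh e -mulrA.
by rewrite [RHS](reindex_inj sh_inj).
Qed.


Hypothesis pr : prime p.

Lemma fermat_k (k : nat) : (k.+1 < p)%N -> (k.+1 ^ p.-1 %% p = 1)%N.
Proof.
move=> kp; have p1 := prime_gt1 pr.
rewrite -(totient_prime pr) Euler_exp_totient ?modn_small //.
by rewrite coprime_sym prime_coprime // gtnNdvd.
Qed.

Lemma Vv_sh x : Vv (shp x) = xi *: Vv x.
Proof.
have p1 := prime_gt1 pr.
apply/rowP => k; rewrite !mxE ah_sh exprMn -exprM.
congr (_ * _); rewrite -expnS.
have -> : (p.-2.+1 = p.-1)%N by lia.
by rewrite xi_mod fermat_k ?expr1 //; case: k => k /=; lia.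
Qed.

Definition chi (t : nat -> C) (j : nat) : C := (tc R p t j)^-1 * tc R p t j.+1.

Lemma tc_norm t j : in_torus R p t -> `|tc R p t j| = 1.
Proof. by rewrite /tc => ht; case: ifP => [/ht|]; rewrite ?normr1. Qed.

Lemma tc_neq0 t j : in_torus R p t -> tc R p t j != 0.
Proof. by move=> ht; rewrite -normr_eq0 tc_norm // oner_eq0. Qed.

Lemma chi_norm t j : in_torus R p t -> `|chi t j| = 1.
Proof. by move=> ht; rewrite /chi normrM normrV ?unitfE ?tc_neq0 // !tc_norm // invr1 mul1r. Qed.

Lemma torus1E t v : torusU R p 1 t v = \row_j (chi t j * v ord0 j).
Proof. by apply/rowP => j; rewrite !mxE. Qed.

Lemma toruspE t v : torusU R p p t v = \row_j (chi t j ^+ p * v ord0 j).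
Proof. by apply/rowP => j; rewrite !mxE -exprz_inv /chi exprMn. Qed.

Lemma prod_chi t : in_torus R p t -> \prod_(j < p) chi t j = 1.
Proof.
move=> ht; rewrite /chi big_split /= prodfV.
have e : \prod_(j < p) tc R p t j.+1 = \prod_(j < p) tc R p t j.
  have := big_ord_recl p (fun j : 'I_p.+1 => tc R p t j) (op := *%R) (idx := 1).
  rewrite (big_ord_recr p (fun j : 'I_p.+1 => tc R p t j)) /=.
  rewrite {1 2}/tc ltnn andbF mulr1 mul1r => ->.
  by apply: eq_bigr => j _.
rewrite e mulVf //; rewrite prodf_seq_neq0; apply/allP => j _; exact: tc_neq0.
Qed.

Definition trp (t : nat -> C) (x : X) : X := (torusU R p 1 t x.1, torusU R p 1 t x.2).

Lemma Zp_tr t x : in_torus R p t -> Zp (trp t x) = Zp x.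
Proof.
move=> ht; rewrite /Zp /trp /= torus1E.
under eq_bigr do rewrite mxE.
by rewrite big_split /= prod_chi // mul1r.
Qed.

Lemma Wp_tr t x : in_torus R p t -> Wp (trp t x) = Wp x.
Proof.
move=> ht; rewrite /Wp /trp /= torus1E.
under eq_bigr do rewrite mxE.
by rewrite big_split /= prod_chi // mul1r.
Qed.

Lemma yv_tr t x : in_torus R p t -> yv (trp t x) = torusU R p p t (yv x).
Proof.
move=> ht; rewrite toruspE; apply/rowP => j.
rewrite !mxE Zp_tr // Wp_tr // /trp /= exprN1 expr1z.
by rewrite !exprMn mulrDr !mulrA.
Qed.

Lemma aa_tr t x j : in_torus R p t -> aa (trp t x) j = aa x j.
Proof.
move=> ht; rewrite /aa /trp /= !mxE exprN1 expr1z !normrM.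
by rewrite !normrV ?unitfE ?tc_neq0 // !tc_norm // invr1 !mul1r.
Qed.

Lemma Vv_tr t x : in_torus R p t -> Vv (trp t x) = Vv x.
Proof.
move=> ht; apply/rowP => k; rewrite !mxE /ah.
by under eq_bigr do rewrite aa_tr //.
Qed.


Lemma iter_shp m x : iter m shp x = (iter m (shiftU R p) x.1, iter m (shiftU R p) x.2).
Proof. by elim: m => [|m IH]; [case: x | rewrite iterS IH]. Qed.

Lemma act_srcE t m x : act_src R p t m x = trp t (iter m shp x).
Proof. by rewrite iter_shp. Qed.

Lemma yv_iter m x : yv (iter m shp x) = iter m (shiftU R p) (yv x).
Proof. by elim: m => [|m IH] //; rewrite !iterS yv_sh IH. Qed.

Lemma Vv_iter m x : Vv (iter m shp x) = xi ^+ m *: Vv x.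
Proof.
elim: m => [|m IH]; first by rewrite scale1r.
by rewrite iterS Vv_sh IH scalerA exprS.
Qed.

Lemma sq_shift v : sqnorm R p (shiftU R p v) = sqnorm R p v.
Proof.
rewrite /sqnorm; under eq_bigr do rewrite shiftUE mxE.
by rewrite [RHS](reindex_inj sh_inj).
Qed.

Lemma sq_iter m v : sqnorm R p (iter m (shiftU R p) v) = sqnorm R p v.
Proof. by elim: m => [|m IH] //; rewrite iterS sq_shift. Qed.

Lemma sq_torus t v : in_torus R p t -> sqnorm R p (torusU R p p t v) = sqnorm R p v.
Proof.
move=> ht; rewrite /sqnorm toruspE; apply: eq_bigr => j _.
by rewrite mxE normrM normrX chi_norm // expr1n mul1r.
Qed.

Lemma sq_scale n (c : C) v : sqnorm R n (c *: v) = `|c| ^+ 2 * sqnorm R n v.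
Proof.
rewrite /sqnorm mulr_sumr; apply: eq_bigr => j _.
by rewrite mxE normrM exprMn.
Qed.

Definition fs : seq (X -> C) :=
  [seq (fun x => yv x ord0 j) | j <- index_enum 'I_p] ++
  [seq (fun x => Vv x ord0 k) | k <- index_enum 'I_p.-1].

Definition nrm (x : X) : C := enorm R (map (fun f => f x) fs).

Lemma nrm_sum x : \sum_(u <- map (fun f => f x) fs) `|u| ^+ 2 =
  sqnorm R p (yv x) + sqnorm R p.-1 (Vv x).
Proof. by rewrite map_cat big_cat /= -!map_comp !big_map. Qed.

Lemma nrm_eq x y : sqnorm R p (yv x) + sqnorm R p.-1 (Vv x) =
  sqnorm R p (yv y) + sqnorm R p.-1 (Vv y) -> nrm x = nrm y.
Proof. by move=> h; apply: (@enorm_eq R); rewrite !nrm_sum. Qed.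

Lemma nrm_act t m x : in_torus R p t -> nrm (act_src R p t m x) = nrm x.
Proof.
move=> ht; apply: nrm_eq; rewrite act_srcE yv_tr // Vv_tr // yv_iter Vv_iter.
by rewrite sq_torus // sq_iter sq_scale normrX xi_norm expr1n expr1n mul1r.
Qed.


Lemma xi_sum n : \sum_(k < p) xi ^+ (k * n) = if (n %% p == 0)%N then p%:R else 0.
Proof.
under eq_bigr do rewrite mulnC exprM [xi ^+ n]xi_mod.
case: ifP => h.
  rewrite (eqP h) expr0; under eq_bigr do rewrite expr1n.
  by rewrite sumr_const card_ord.
set q := xi ^+ (n %% p).
have q1 : q != 1 by apply: xiX_neq1; rewrite lt0n h ltn_pmod.
have qp : q ^+ p = 1 by rewrite /q -exprM mulnC exprM xiXp // expr1n.
have := subrX1 q p; rewrite qp subrr => /esym/eqP; rewrite mulf_eq0 subr_eq0.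
by rewrite (negbTE q1) /= => /eqP.
Qed.

Lemma mod_test (j l : 'I_p) : (((p - l + j) %% p == 0) = (j == l))%N.
Proof.
case: j l => j jp [l lp] /=.
have [jl|lj] := ltnP j l.
  rewrite modn_small; last by lia.
  apply/idP/idP; first by lia.
  by move/eqP => [] e; lia.
have -> : (p - l + j = (j - l) + p)%N by lia.
rewrite modnDr modn_small; last by lia.
apply/idP/idP => [h|/eqP [] e]; last by lia.
by apply/eqP; apply: val_inj => /=; lia.
Qed.

Hypothesis podd : odd p.

Lemma nrm_neq0 x : S_src R p x -> nrm x != 0.
Proof.
move=> hS; apply/eqP => h0.
have H := @enorm_eq0 R _ h0.
have Y : forall j, yv x ord0 j = 0.
  move=> j; apply: H; rewrite map_cat mem_cat; apply/orP; left.
  rewrite -map_comp; apply: (map_f (fun j => yv x ord0 j)).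
  exact: mem_index_enum.
have V : forall k, Vv x ord0 k = 0.
  move=> k; apply: H; rewrite map_cat mem_cat; apply/orP; right.
  rewrite -map_comp; apply: (map_f (fun k => Vv x ord0 k)).
  exact: mem_index_enum.
have ZW : Zp x = 0 /\ Wp x = 0.
  have e : \prod_(j < p) (x.1 ord0 j ^+ p * (Zp x)^*) =
           \prod_(j < p) - (x.2 ord0 j ^+ p * (Wp x)^*).
    apply: eq_bigr => j _; apply/eqP; rewrite -addr_eq0; apply/eqP.
    by have := Y j; rewrite mxE.
  rewrite prodrN big_split [in RHS]big_split /= !prodrXl !prodr_const !card_ord in e.
  rewrite -signr_odd podd expr1 mulN1r -!exprMn -!normCK -!exprM in e.
  move/eqP: e; rewrite -addr_eq0 paddr_eq0 ?exprn_ge0 ?normr_ge0 //.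
  rewrite !expf_eq0 !normr_eq0 => /andP[/andP[_ /eqP a] /andP[_ /eqP b]].
  by split.
case: ZW => /eqP /prodf_eq0 [j0 _ /eqP z0] /eqP /prodf_eq0 [k0 _ /eqP w0].
have AH : forall k, (0 < k < p)%N -> ah x k = 0.
  move=> k /andP[k0' kp].
  have kp' : (k.-1 < p.-1)%N by lia.
  have := V (Ordinal kp'); rewrite mxE prednK // => /eqP.
  by rewrite expf_eq0 => /andP[_ /eqP].
have DFT : forall l : 'I_p, p%:R * aa x l = \sum_(j < p) aa x j.
  move=> l.
  have e1 : \sum_(k < p) xi ^+ (k * (p - l)) * ah x k = \sum_(j < p) aa x j.
    rewrite (bigD1 (Ordinal p0)) //= big1 ?addr0.
      by rewrite mul0n expr0 mul1r /ah; apply: eq_bigr => j _; rewrite mul0n expr0 mul1r.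
    move=> k hk; rewrite AH ?mulr0 // ltn_ord andbT lt0n.
    by apply: contra hk => /eqP hk; apply/eqP/val_inj.
  rewrite -e1 /ah.
  under eq_bigr do rewrite mulr_sumr.
  rewrite exchange_big /=.
  under eq_bigr do (under eq_bigr do rewrite mulrA -exprD -mulnDr; rewrite -mulr_suml xi_sum mod_test).
  rewrite (bigD1 l) //= eqxx big1 ?addr0 // => j hj.
  by rewrite (negbTE hj) mul0r.
have cst : forall j, aa x j = aa x j0.
  move=> j; apply: (mulfI (x := p%:R)); first by rewrite pnatr_eq0 -lt0n.
  by rewrite !DFT.
have rz : forall j, `|x.1 ord0 j| ^+ 2 = 0.
  move=> j; have := cst j; rewrite /aa z0 normr0 expr0n /= add0r.
  move/(congr1 (fun u => 'Re u)); rewrite Re_rect ?rpredX ?normr_real //.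
  by rewrite -[X in 'Re X]add0r Re_rect ?rpred0 ?rpredX ?normr_real.
have rw : forall j, `|x.2 ord0 j| ^+ 2 = 0.
  move=> j; have := cst j; rewrite -(cst k0) /aa w0 normr0 expr0n /= mulr0 addr0.
  move/(congr1 (fun u => 'Im u)); rewrite Im_rect ?rpredX ?normr_real //.
  by rewrite -[X in 'Im X]addr0 -[X in 'Im (_ + X)](mulr0 'i) Im_rect ?rpred0 ?rpredX ?normr_real.
have s1 : sqnorm R p x.1 = 0 by rewrite /sqnorm big1 // => j _; exact: rz.
have s2 : sqnorm R p x.2 = 0 by rewrite /sqnorm big1 // => j _; exact: rw.
move: hS; rewrite /S_src /= s1 s2 addr0 => /esym/eqP.
by rewrite oner_eq0.
Qed.

End Main.

Section Final.
Variable R : realType.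
Local Notation C := (Cplx R).
Variable p : nat.
Local Notation X := (src R p).

Definition fmap (x : X) : tgt R p :=
  ((nrm R p x)^-1 *: yv R p x, (nrm R p x)^-1 *: Vv R p x).

Lemma cont_yv : continuous (yv R p).
Proof.
apply: cont_row => j; rewrite /yv.
under eq_fun do rewrite mxE.
apply: contD; apply: contM; try apply: cont_exp; try apply: cont_conj;
  try apply: cont_prod => *; first [exact: cont_z | exact: cont_w].
Qed.

Lemma cont_aa j : continuous (fun x => aa R p x j).
Proof.
rewrite /aa; apply: contD; last apply: contM; try exact: contK;
  apply: cont_exp; apply: cont_norm; first [exact: cont_z | exact: cont_w].
Qed.

Lemma cont_Vv : continuous (Vv R p).
Proof.
apply: cont_row => k; rewrite /Vv.
under eq_fun do rewrite mxE.
apply: cont_exp; rewrite /ah; apply: cont_sum => j.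
apply: contM; [exact: contK | exact: cont_aa].
Qed.

Lemma cont_entry n (g : X -> 'rV[C]_n) j : continuous g ->
  continuous (fun x => g x ord0 j).
Proof.
move=> gc x; apply: (@continuous_comp _ _ _ g (fun M : 'rV[C]_n => M ord0 j) x (gc x)).
exact: coord_continuous.
Qed.

Lemma cont_nrm : continuous (nrm R p).
Proof.
apply: enorm_cont => f; rewrite mem_cat => /orP[] /mapP [j _ ->].
  exact: (cont_entry _ _ j cont_yv).
exact: (cont_entry _ _ j cont_Vv).
Qed.


Lemma shiftU_scale (c : C) v : shiftU R p (c *: v) = c *: shiftU R p v.
Proof. by apply/rowP => j; rewrite !mxE. Qed.

Lemma iter_scale m (c : C) v :
  iter m (shiftU R p) (c *: v) = c *: iter m (shiftU R p) v.
Proof. by elim: m => [|m IH] //; rewrite !iterS IH shiftU_scale. Qed.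

Lemma torusU_scale k t (c : C) v : torusU R p k t (c *: v) = c *: torusU R p k t v.
Proof. by apply/rowP => j; rewrite !mxE mulrCA. Qed.

End Final.

Theorem mainTheorem12 (R : realType) (p : nat) :
  prime p -> odd p ->
  exists f : src R p -> tgt R p,
    {within S_src R p, continuous f} /\
    (forall x, S_src R p x -> S_tgt R p (f x)) /\
    (forall (t : nat -> Cplx R) (m : nat) (x : src R p),
        in_torus R p t -> S_src R p x ->
        f (act_src R p t m x) = act_tgt R p t m (f x)).
Proof.
move=> pr podd; have p0 := prime_gt0 pr.
exists (fmap R p); split; [|split].
- apply: (continuous_in_subspaceT (A := S_src R p) (f := fmap R p)) => x; rewrite inE => xS.
  have hn : {for x, continuous (fun y => (nrm R p y)^-1)}.
    by apply: continuousV; [exact: nrm_neq0 | exact: cont_nrm].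
  have h1 : {for x, continuous (fun y => (nrm R p y)^-1 *: yv R p y)}.
    by apply: continuousZ; [exact: hn | exact: cont_yv].
  have h2 : {for x, continuous (fun y => (nrm R p y)^-1 *: Vv R p y)}.
    by apply: continuousZ; [exact: hn | exact: cont_Vv].
  exact: (cvg_pair h1 h2).
- move=> x xS; rewrite /S_tgt /fmap /= !sq_scale -mulrDr -nrm_sum.
  rewrite -enorm_sq -/(nrm R p x) ger0_norm ?invr_ge0 ?enorm_ge0 //.
  by rewrite exprVn mulVf // expf_neq0 // nrm_neq0.
- move=> t m x ht xS; rewrite /fmap (@nrm_act R p p0 pr t m x ht) act_srcE yv_tr // Vv_tr //.
  rewrite yv_iter Vv_iter /act_tgt /actU /actV.
  2,3: solve [exact: p0 | exact: pr].
  f_equal.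
    by rewrite -torusU_scale -iter_scale.
  by rewrite scalerA mulrC -scalerA.
Qed.
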